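(* Let $A,B,C>0$ and $q>1$, and let $f(t)=At-\frac Bt-Ct^q$ and $g(t)=At^2+B-Cqt^{q+1}$ for $t\in(0,+\infty)$. Then there exist $\bar t,t^-,t^+$ such that (i) $0<t^+<\bar t<t^-$ and $f(t^+)=f(t^-)=0$; (ii) $f'(t^+)>0$ and $f'(t^-)<0$; (iii) $g(t)>0$ on $(0,\bar t)$ and $g(t)<0$ on $(\bar t,+\infty)$, if and only if $$\frac{(q-1)^{\frac{q-1}2}}{(q+1)^{\frac{q+1}2}}\cdot\frac{A^{\frac{q+1}2}}{B^{\frac{q-1}2}}>\frac C2.$$ *)

(* Defs.v *)
From Stdlib Require Import Reals.
From Coquelicot Require Import Coquelicot.
Open Scope R_scope.

Definition f_fun (A B C q : R) (t : R) : R := A * t - B / t - C * Rpower t q.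

Definition g_fun (A B C q : R) (t : R) : R :=
  A * t ^ 2 + B - C * q * Rpower t (q + 1).

Definition threshold_cond (A B C q : R) : Prop :=
  Rpower (q - 1) ((q - 1) / 2) / Rpower (q + 1) ((q + 1) / 2)
  * (Rpower A ((q + 1) / 2) / Rpower B ((q - 1) / 2)) > C / 2.

(* Main.v *)
Require Import Defs.
From Stdlib Require Import Reals Lra Ranalysis5.
From Coquelicot Require Import Coquelicot.
Open Scope R_scope.

Lemma RP1 x r : 0 < x -> Rpower x r = x * Rpower x (r-1).
Proof.
intros hx. unfold Rpower.
replace (r * ln x) with ((r-1)*ln x + ln x) by ring.
rewrite exp_plus, exp_ln by exact hx. ring.
Qed.

Lemma RP_pos x r : 0 < Rpower x r.
Proof. unfold Rpower; apply exp_pos. Qed.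

Lemma deriv_f A B C q x : 0 < x ->
  is_derive (f_fun A B C q) x (A + B/(x*x) - C*q*Rpower x (q-1)).
Proof.
intros hx. unfold f_fun, Rpower. auto_derive.
- repeat split; lra.
- replace (q * ln x) with ((q-1)*ln x + ln x) by ring.
  rewrite exp_plus, exp_ln by exact hx. field. lra.
Qed.

Definition hh A B C q t := A*t*t - B - C*Rpower t (q+1).

Lemma deriv_h A B C q x : 0 < x ->
  is_derive (hh A B C q) x (2*A*x - C*(q+1)*(x*Rpower x (q-1))).
Proof.
intros hx. unfold hh, Rpower. auto_derive.
- repeat split; lra.
- replace ((q+1) * ln x) with ((q-1)*ln x + ln x + ln x) by ring.
  rewrite !exp_plus, exp_ln by exact hx. field. lra.
Qed.

Definition Fp A B C q t := A + B/(t*t) - C*q*Rpower t (q-1).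

Lemma exd_Fp A B C q x : 0 < x -> ex_derive (Fp A B C q) x.
Proof.
intros hx. unfold Fp, Rpower. auto_derive. repeat split; nra.
Qed.

Lemma cont_of_exd (f : R -> R) x : ex_derive f x -> continuity_pt f x.
Proof.
intros [l H]. apply derivable_continuous_pt. exists l. apply is_derive_Reals. exact H.
Qed.

Lemma ex_of (f : R -> R) x l : is_derive f x l -> ex_derive f x.
Proof. intros H; exists l; exact H. Qed.

Lemma P_lt q s t : 1 < q -> 0 < s < t -> Rpower s (q-1) < Rpower t (q-1).
Proof. intros. apply Rlt_Rpower_l; lra. Qed.

Lemma P_lt_inv q s t : 1 < q -> 0 < s -> 0 < t ->
  Rpower s (q-1) < Rpower t (q-1) -> s < t.
Proof.
intros hq hs ht H. destruct (Rlt_or_le s t) as [h|h]; auto.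
assert (Rpower t (q-1) <= Rpower s (q-1)) by (apply Rle_Rpower_l; lra). lra.
Qed.

Lemma root_prop q K : 1 < q -> 0 < K -> Rpower (Rpower K (/(q-1))) (q-1) = K.
Proof.
intros. rewrite Rpower_mult. replace (/(q-1)*(q-1)) with 1 by (field; lra).
apply Rpower_1; auto.
Qed.

Lemma dlim_h A B C q c : 0 < c ->
  derivable_pt_lim (hh A B C q) c (2*A*c - C*(q+1)*(c*Rpower c (q-1))).
Proof. intros; apply is_derive_Reals, deriv_h; auto. Qed.

Lemma h_incr A B C q s t : 0 < A -> 0 < C -> 1 < q -> 0 < s < t ->
  Rpower t (q-1) <= 2*A/(C*(q+1)) -> hh A B C q s < hh A B C q t.
Proof.
intros hA hC hq hst hK.
destruct (MVT_cor2 (hh A B C q) (fun c => 2*A*c - C*(q+1)*(c*Rpower c (q-1))) s t)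
  as [c [E hc]]; [lra| intros; apply dlim_h; lra |].
assert (Pc : Rpower c (q-1) < Rpower t (q-1)) by (apply P_lt; lra).
assert (h1 : C*(q+1)*Rpower c (q-1) < 2*A).
{ assert (C*(q+1)*Rpower c (q-1) < C*(q+1)*(2*A/(C*(q+1)))).
  { apply Rmult_lt_compat_l; [nra|lra]. }
  replace (C*(q+1)*(2*A/(C*(q+1)))) with (2*A) in H by (field; lra). lra. }
assert (h2 : 0 < (2*A - C*(q+1)*Rpower c (q-1)) * c) by (apply Rmult_lt_0_compat; lra).
assert (h3 : 0 < (2*A - C*(q+1)*Rpower c (q-1)) * c * (t-s)) by (apply Rmult_lt_0_compat; lra).
assert (hh A B C q t - hh A B C q s > 0).
{ rewrite E. replace ((2 * A * c - C * (q + 1) * (c * Rpower c (q - 1))) * (t - s))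
  with ((2*A - C*(q+1)*Rpower c (q-1)) * c * (t-s)) by ring. lra. }
lra.
Qed.

Lemma h_decr A B C q s t : 0 < A -> 0 < C -> 1 < q -> 0 < s < t ->
  2*A/(C*(q+1)) <= Rpower s (q-1) -> hh A B C q t < hh A B C q s.
Proof.
intros hA hC hq hst hK.
destruct (MVT_cor2 (hh A B C q) (fun c => 2*A*c - C*(q+1)*(c*Rpower c (q-1))) s t)
  as [c [E hc]]; [lra| intros; apply dlim_h; lra |].
assert (Pc : Rpower s (q-1) < Rpower c (q-1)) by (apply P_lt; lra).
assert (h1 : 2*A < C*(q+1)*Rpower c (q-1)).
{ assert (C*(q+1)*(2*A/(C*(q+1))) < C*(q+1)*Rpower c (q-1)).
  { apply Rmult_lt_compat_l; [nra|lra]. }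
  replace (C*(q+1)*(2*A/(C*(q+1)))) with (2*A) in H by (field; lra). lra. }
assert (h2 : 0 < (C*(q+1)*Rpower c (q-1) - 2*A) * c) by (apply Rmult_lt_0_compat; lra).
assert (h3 : 0 < (C*(q+1)*Rpower c (q-1) - 2*A) * c * (t-s)) by (apply Rmult_lt_0_compat; lra).
assert (hh A B C q t - hh A B C q s < 0).
{ rewrite E. replace ((2 * A * c - C * (q + 1) * (c * Rpower c (q - 1))) * (t - s))
  with (-((C*(q+1)*Rpower c (q-1) - 2*A) * c * (t-s))) by ring. lra. }
lra.
Qed.

Lemma RP2 x q : 0 < x -> Rpower x (q+1) = x*x*Rpower x (q-1).
Proof.
intros hx. rewrite (RP1 x (q+1)) by auto. rewrite (RP1 x (q+1-1)) by auto.
replace (q+1-1-1) with (q-1) by ring. ring.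
Qed.

Lemma pow_mono_iff X Y e : 0 < e -> 0 < X -> 0 < Y ->
  (Y < X <-> Rpower Y e < Rpower X e).
Proof.
intros he hX hY; split; intro H.
- apply Rlt_Rpower_l; lra.
- destruct (Rlt_or_le Y X) as [h|h]; auto.
  assert (Rpower X e <= Rpower Y e) by (apply Rle_Rpower_l; lra). lra.
Qed.

Lemma thr A B C q : 0 < A -> 0 < B -> 0 < C -> 1 < q ->
  (0 < hh A B C q (Rpower (2*A/(C*(q+1))) (/(q-1))) <-> threshold_cond A B C q).
Proof.
intros hA hB hC hq.
set (K := 2*A/(C*(q+1))).
assert (hK : 0 < K) by (unfold K; apply Rdiv_lt_0_compat; nra).
set (ts := Rpower K (/(q-1))).
assert (hts : 0 < ts) by apply RP_pos.
assert (Pts : Rpower ts (q-1) = K) by (apply root_prop; auto).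
set (e := (q-1)/2).
assert (he : 0 < e) by (unfold e; lra).
assert (E1 : hh A B C q ts = ts*ts*A*(q-1)/(q+1) - B).
{ unfold hh. rewrite RP2 by auto. rewrite Pts. unfold K. field. lra. }
assert (E2 : Rpower (ts*ts*A*(q-1)) e = K * Rpower A e * Rpower (q-1) e).
{ rewrite <- !Rpower_mult_distr by (try apply Rmult_lt_0_compat; try apply Rmult_lt_0_compat; lra).
  rewrite <- Rpower_plus. replace (e+e) with (q-1) by (unfold e; field). rewrite Pts. ring. }
assert (E3 : Rpower (B*(q+1)) e = Rpower B e * Rpower (q+1) e).
{ rewrite <- Rpower_mult_distr by lra. ring. }
assert (E4 : Rpower (q+1) ((q+1)/2) = Rpower (q+1) e * (q+1)).
{ replace ((q+1)/2) with (e+1) by (unfold e; field). rewrite Rpower_plus, Rpower_1 by lra. ring. }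
assert (E5 : Rpower A ((q+1)/2) = A * Rpower A e).
{ replace ((q+1)/2) with (e+1) by (unfold e; field). rewrite Rpower_plus, Rpower_1 by lra. ring. }
unfold threshold_cond. fold e. rewrite E4, E5.
rewrite E1.
pose proof (RP_pos A e) as ha. pose proof (RP_pos B e) as hb.
pose proof (RP_pos (q-1) e) as hm. pose proof (RP_pos (q+1) e) as hp.
set (a := Rpower A e) in *. set (b := Rpower B e) in *.
set (m := Rpower (q-1) e) in *. set (p := Rpower (q+1) e) in *.
assert (S1 : 0 < ts*ts*A*(q-1)/(q+1) - B <-> B*(q+1) < ts*ts*A*(q-1)).
{ split; intro H.
  - assert (0 < (ts*ts*A*(q-1)/(q+1) - B)*(q+1)) by (apply Rmult_lt_0_compat; lra).
    replace ((ts*ts*A*(q-1)/(q+1) - B)*(q+1)) with (ts*ts*A*(q-1) - B*(q+1)) in H0 by (field; lra). lra.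
  - assert (0 < (ts*ts*A*(q-1) - B*(q+1)) / (q+1)) by (apply Rdiv_lt_0_compat; lra).
    replace ((ts*ts*A*(q-1) - B*(q+1)) / (q+1)) with (ts*ts*A*(q-1)/(q+1) - B) in H0 by (field; lra). lra. }
rewrite S1.
assert (0 < ts*ts*A*(q-1)) by (repeat apply Rmult_lt_0_compat; lra).
rewrite (pow_mono_iff (ts*ts*A*(q-1)) (B*(q+1)) e) by (auto; nra).
rewrite E2, E3. fold a b m p.
unfold K.
assert (hpq : 0 < p * (q+1)) by nra.
clear H; split; intro H.
- unfold Rgt.
  apply Rmult_lt_reg_r with (r := 2 * (p*(q+1)) * b); [nra|].
  replace (C / 2 * (2 * (p * (q + 1)) * b)) with (C*(q+1)*(b*p)) by field.
  replace (m / (p * (q + 1)) * (A * a / b) * (2 * (p * (q + 1)) * b)) with (2*A*a*m) by (field; lra).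
  apply Rmult_lt_reg_r with (r := /(C*(q+1))). apply Rinv_0_lt_compat; nra.
  replace (C * (q + 1) * (b * p) * / (C * (q + 1))) with (b*p) by (field; lra).
  replace (2 * A * a * m * / (C * (q + 1))) with (2 * A / (C * (q + 1)) * a * m) by (field; lra).
  exact H.
- unfold Rgt in H.
  apply Rmult_lt_reg_r with (r := (C*(q+1))); [nra|].
  replace (b * p * (C * (q + 1))) with (C/2 * (2*(p*(q+1))*b)) by field.
  replace (2 * A / (C * (q + 1)) * a * m * (C * (q + 1))) with
    (m / (p * (q + 1)) * (A * a / b) * (2 * (p * (q + 1)) * b)) by (field; repeat split; lra).
  apply Rmult_lt_compat_r; [nra| exact H].
Qed.

Lemma fh A B C q t : 0 < t -> f_fun A B C q t * t = hh A B C q t.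
Proof.
intros ht. unfold f_fun, hh. rewrite (RP1 t (q+1)) by auto.
replace (q+1-1) with q by ring. field. lra.
Qed.

Lemma Derive_f A B C q t : 0 < t -> Derive (f_fun A B C q) t = Fp A B C q t.
Proof. intros; apply is_derive_unique, deriv_f; auto. Qed.

Lemma dsign A B C q t : 0 < C -> 1 < q -> 0 < t -> hh A B C q t = 0 ->
  Derive (f_fun A B C q) t * (t*t) = (t*t)*(C*(q+1))*(2*A/(C*(q+1)) - Rpower t (q-1)).
Proof.
intros hC hq ht H. rewrite Derive_f by auto. unfold Fp.
unfold hh in H. rewrite RP2 in H by auto.
assert (B = A*t*t - C*(t*t*Rpower t (q-1))) by lra.
rewrite H0. field. split; lra.
Qed.

Lemma sign_pos X Y Z : 0 < Y -> X = Y * Z -> (0 < X <-> 0 < Z).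
Proof.
intros hY E; subst; split; intro H.
- destruct (Rlt_or_le 0 Z) as [h|h]; auto. assert (Y*Z <= 0) by nra. lra.
- nra.
Qed.

Lemma sign_neg X Y Z : 0 < Y -> X = Y * Z -> (X < 0 <-> Z < 0).
Proof.
intros hY E; subst; split; intro H.
- destruct (Rlt_or_le Z 0) as [h|h]; auto. assert (0 <= Y*Z) by nra. lra.
- nra.
Qed.

Lemma Fp_decr A B C q s t : 0 < B -> 0 < C -> 1 < q -> 0 < s < t ->
  Fp A B C q t < Fp A B C q s.
Proof.
intros hB hC hq hst. unfold Fp.
assert (Rpower s (q-1) < Rpower t (q-1)) by (apply P_lt; lra).
assert (B/(t*t) < B/(s*s)).
{ apply Rmult_lt_compat_l; auto. assert (0 < s*s) by nra. assert (s*s < t*t) by nra.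
  apply Rinv_lt_contravar; nra. }
assert (C*q*Rpower s (q-1) < C*q*Rpower t (q-1)) by (apply Rmult_lt_compat_l; nra).
lra.
Qed.

Lemma g_Fp A B C q t : 0 < t -> g_fun A B C q t = t*t*Fp A B C q t.
Proof.
intros ht. unfold g_fun, Fp. rewrite RP2 by auto. field. lra.
Qed.

Theorem proposition4p2 (A B C q : R)
  (hA : 0 < A) (hB : 0 < B) (hC : 0 < C) (hq : 1 < q) :
  (exists tbar tm tp : R,
      (0 < tp /\ tp < tbar /\ tbar < tm /\
       f_fun A B C q tp = 0 /\ f_fun A B C q tm = 0) /\
      (Derive (f_fun A B C q) tp > 0 /\ Derive (f_fun A B C q) tm < 0) /\
      ((forall t, 0 < t < tbar -> g_fun A B C q t > 0) /\
       (forall t, tbar < t -> g_fun A B C q t < 0)))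
  <-> threshold_cond A B C q.
Proof.
rewrite <- thr by auto.
set (K := 2*A/(C*(q+1))).
assert (hK : 0 < K) by (unfold K; apply Rdiv_lt_0_compat; nra).
set (ts := Rpower K (/(q-1))).
assert (hts : 0 < ts) by apply RP_pos.
assert (Pts : Rpower ts (q-1) = K) by (apply root_prop; auto).
split.
- intros [tbar [tm [tp [[h1 [h2 [h3 [f1 f2]]]] [[d1 d2] _]]]]].
  assert (hp0 : hh A B C q tp = 0) by (rewrite <- fh by auto; rewrite f1; ring).
  pose proof (dsign A B C q tp hC hq h1 hp0) as E.
  assert (Hs : 0 < K - Rpower tp (q-1)).
  { assert (P0 : 0 < tp*tp*(C*(q+1))) by (apply Rmult_lt_0_compat; nra).
    apply (sign_pos _ _ _ P0 E). apply Rmult_lt_0_compat; nra. }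
  assert (tp < ts) by (apply (P_lt_inv q); auto; lra).
  rewrite <- hp0. apply h_incr; auto. rewrite Pts; apply Rle_refl.
- intros Hts.
  set (s0 := Rmin (Rmin 1 (B/(2*A))) (ts/2)).
  assert (hs0 : 0 < s0).
  { unfold s0. apply Rmin_glb_lt; [apply Rmin_glb_lt|]; try lra.
    apply Rdiv_lt_0_compat; lra. }
  assert (hs1 : s0 <= 1) by (unfold s0; eapply Rle_trans; [apply Rmin_l|apply Rmin_l]).
  assert (hs2 : s0 <= B/(2*A)) by (unfold s0; eapply Rle_trans; [apply Rmin_l|apply Rmin_r]).
  assert (hs3 : s0 <= ts/2) by (unfold s0; apply Rmin_r).
  assert (hhs0 : hh A B C q s0 < 0).
  { unfold hh. rewrite RP2 by auto.
    pose proof (RP_pos s0 (q-1)).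
    assert (A*s0 <= B/2).
    { replace (B/2) with (A*(B/(2*A))) by (field; lra). apply Rmult_le_compat_l; lra. }
    assert (0 < C*(s0*s0*Rpower s0 (q-1))) by (repeat apply Rmult_lt_0_compat; auto).
    assert (A*s0*s0 <= B/2*s0) by (apply Rmult_le_compat_r; lra).
    assert (B/2*s0 <= B/2) by nra.
    lra. }
  set (T := ts + Rpower (A/C+1) (/(q-1))).
  assert (hT0 : 0 < Rpower (A/C+1) (/(q-1))) by apply RP_pos.
  assert (hT : ts < T) by (unfold T; lra).
  assert (hhT : hh A B C q T < 0).
  { unfold hh. rewrite RP2 by lra.
    assert (A/C + 1 < Rpower T (q-1)).
    { rewrite <- (root_prop q (A/C+1)) at 1 by (auto; assert (0 < A/C) by (apply Rdiv_lt_0_compat; lra); lra).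
      apply P_lt; auto; unfold T; lra. }
    assert (A < C * Rpower T (q-1)).
    { assert (C*(A/C+1) < C*Rpower T (q-1)) by (apply Rmult_lt_compat_l; auto).
      replace (C*(A/C+1)) with (A + C) in H0 by (field; lra). lra. }
    assert (0 < T*T) by nra. nra. }
  destruct (IVT_interv (hh A B C q) s0 ts) as [tp [[htp1 htp2] htp]].
  { intros a Ha. apply cont_of_exd. eapply ex_of. apply deriv_h. lra. }
  { lra. } { exact hhs0. } { exact Hts. }
  assert (tp1 : s0 < tp) by (destruct htp1 as [h|h]; auto; subst; lra).
  assert (tp2 : tp < ts) by (destruct htp2 as [h|h]; auto; subst; lra).
  destruct (IVT_interv (fun t => - hh A B C q t) ts T) as [tm [[htm1 htm2] htm]].
  { intros a Ha. apply continuity_pt_opp. apply cont_of_exd. eapply ex_of. apply deriv_h. lra. }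
  { lra. } { lra. } { lra. }
  assert (htm' : hh A B C q tm = 0) by lra.
  assert (tm1 : ts < tm) by (destruct htm1 as [h|h]; auto; subst; lra).
  assert (tm2 : tm < T) by (destruct htm2 as [h|h]; auto; subst; lra).
  assert (Ptp : Rpower tp (q-1) < K) by (rewrite <- Pts; apply P_lt; lra).
  assert (Ptm : K < Rpower tm (q-1)) by (rewrite <- Pts; apply P_lt; lra).
  assert (Dp : Derive (f_fun A B C q) tp > 0).
  { pose proof (dsign A B C q tp hC hq ltac:(lra) htp) as E.
    assert (0 < Derive (f_fun A B C q) tp * (tp*tp)).
    { rewrite E. apply Rmult_lt_0_compat; [|fold K; lra]. apply Rmult_lt_0_compat; nra. }
    apply (sign_pos _ _ _ (ltac:(nra) : 0 < tp*tp)
      (ltac:(ring) : Derive (f_fun A B C q) tp * (tp*tp) = tp*tp * Derive (f_fun A B C q) tp)).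
    exact H. }
  assert (Dm : Derive (f_fun A B C q) tm < 0).
  { pose proof (dsign A B C q tm hC hq ltac:(lra) htm') as E.
    assert (Derive (f_fun A B C q) tm * (tm*tm) < 0).
    { rewrite E. assert (0 < tm*tm*(C*(q+1))) by (apply Rmult_lt_0_compat; nra).
      fold K. nra. }
    apply (sign_neg _ _ _ (ltac:(nra) : 0 < tm*tm)
      (ltac:(ring) : Derive (f_fun A B C q) tm * (tm*tm) = tm*tm * Derive (f_fun A B C q) tm)).
    exact H. }
  rewrite Derive_f in Dp by lra. rewrite Derive_f in Dm by lra.
  destruct (IVT_interv (fun t => - Fp A B C q t) tp tm) as [tb [[htb1 htb2] htb]].
  { intros a Ha. apply continuity_pt_opp. apply cont_of_exd. apply exd_Fp. lra. }
  { lra. } { lra. } { lra. }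
  assert (tb1 : tp < tb) by (destruct htb1 as [h|h]; auto; subst; lra).
  assert (tb2 : tb < tm) by (destruct htb2 as [h|h]; auto; subst; lra).
  exists tb, tm, tp.
  split; [repeat split; try lra|].
  { apply (Rmult_eq_reg_r tp); [|lra]. rewrite fh by lra. rewrite htp. ring. }
  { apply (Rmult_eq_reg_r tm); [|lra]. rewrite fh by lra. rewrite htm'. ring. }
  split; [rewrite !Derive_f by lra; lra|].
  split.
  + intros t [ht1 ht2]. rewrite g_Fp by lra.
    assert (Fp A B C q tb < Fp A B C q t) by (apply Fp_decr; lra).
    assert (0 < t*t) by nra. apply Rlt_gt. apply Rmult_lt_0_compat; lra.
  + intros t ht. rewrite g_Fp by lra.
    assert (Fp A B C q t < Fp A B C q tb) by (apply Fp_decr; lra).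
    assert (0 < t*t) by nra. nra.
Qed.
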